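(* For every constant $\epsilon>0$, no deterministic online algorithm is $(\frac12+\epsilon)$-competitive for the maximum-weight online bipartite left-perfect matching problem under vertex arrivals with hard budget $k=4$, even when all edge weights are in $\{0,1\}$. That is, for every deterministic online algorithm for this problem and every constant $c\ge0$, there is an instance with all edge weights in $\{0,1\}$ on which the weight of the algorithm's final left-perfect matching is strictly less than $(\frac12+\epsilon)\cdot\mathsf{OPT}-c$, where $\mathsf{OPT}$ is the maximum weight of a left-perfect matching of $G$.
   Context: Problem: $G=(L\cup R,E)$ is a complete bipartite graph with $|L|\le|R|$ and nonnegative edge weights $w$. The algorithm initially knows $R$ (and $k=4$). Over $|L|$ timesteps the vertices of $L$ arrive one at a time, together with all incident edges and their weights. At the end of each timestep the algorithm must output a left-perfect matching of the revealed graph (every arrived vertex of $L$ matched). The new matching $M_2$ must be obtainable from the previous one $M_1$ (empty before the first timestep) by at most $4$ (re)assignments, the number of (re)assignments being the number of vertices of nonzero degree in $M_1\triangle M_2$; once a vertex is matched it must remain matched afterwards. An algorithm is $\alpha$-competitive if there is a constant $c\ge0$ such that on every instance the weight of its final matching is at least $\alpha\cdot\mathsf{OPT}-c$. *)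

(* Defs.v *)
From HB Require Import structures.
From mathcomp Require Import all_boot all_order all_algebra.
From mathcomp Require Import reals.
Set Implicit Arguments. Unset Strict Implicit. Unset Printing Implicit Defensive.
Import Order.TTheory GRing.Theory Num.Theory.
Local Open Scope ring_scope.

(* Conventions.
   - The right side R of the bipartite graph is 'I_m (m = |R|), known upfront.
   - The left vertex arriving at timestep i (0-based) is identified with i; it
     is revealed together with its weight vector  w_i : 'I_m -> R  (the graph is
     complete bipartite, so a weight vector describes all incident edges).
   - A left-perfect matching of the revealed graph after t arrivals is a
     sequence s : seq 'I_m with size s = t and uniq s (left vertex i is matched
     to right vertex s`_i).
   - A deterministic online algorithm maps m and the sequence of revealed
     weight vectors to its current matching. *)

Definition online_alg (R : realType) :=
  forall m : nat, seq ('I_m -> R) -> seq 'I_m.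

Definition medges m (s : seq 'I_m) : seq (nat * 'I_m) := zip (iota 0 (size s)) s.

Definition edge_vertices m (E : seq (nat * 'I_m)) : seq (nat + 'I_m) :=
  [seq inl e.1 | e <- E] ++ [seq inr e.2 | e <- E].

(* number of (re)assignments = number of vertices of nonzero degree in the
   symmetric difference M1 (+) M2 of the two matchings *)
Definition num_reassign m (s1 s2 : seq 'I_m) : nat :=
  let E1 := medges s1 in let E2 := medges s2 in
  let D := [seq e <- E1 | e \notin E2] ++ [seq e <- E2 | e \notin E1] in
  size (undup (edge_vertices D)).

Definition left_perfect m (t : nat) (s : seq 'I_m) : bool :=
  (size s == t) && uniq s.

(* a legal update with budget k: at most k (re)assignments, and every right
   vertex matched in M1 stays matched in M2 (left vertices stay matched by
   left-perfectness) *)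
Definition legal_update (k : nat) m (s1 s2 : seq 'I_m) : Prop :=
  (num_reassign s1 s2 <= k)%N /\ (forall r, r \in s1 -> r \in s2).

Definition valid_alg (R : realType) (k : nat) (A : online_alg R) : Prop :=
  forall (m : nat) (ws : seq ('I_m -> R)),
    (size ws <= m)%N ->
    (forall i r, (i < size ws)%N -> 0 <= nth (fun _ => 0) ws i r) ->
    left_perfect (size ws) (A m ws) /\
    (forall ws' w, ws = rcons ws' w -> legal_update k (A m ws') (A m ws)).

Definition mweight (R : realType) m (ws : seq ('I_m -> R)) (s : seq 'I_m) : R :=
  \sum_(p <- zip ws s) p.1 p.2.

Definition OPT (R : realType) m (ws : seq ('I_m -> R)) : R :=
  \big[Num.max/0]_(f : {ffun 'I_(size ws) -> 'I_m} | injectiveb f)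
     \sum_(i < size ws) (nth (fun _ => 0) ws i) (f i).

Definition zero_one_weights (R : realType) m (ws : seq ('I_m -> R)) : Prop :=
  forall i r, (i < size ws)%N ->
    nth (fun _ => 0) ws i r = 0 \/ nth (fun _ => 0) ws i r = 1.

(* Main.v *)
Require Import Defs.
From HB Require Import structures.
From mathcomp Require Import all_boot all_order all_algebra.
From mathcomp Require Import reals.
From mathcomp Require Import zify.
From mathcomp.algebra_tactics Require Import ring lra.
Import Order.TTheory GRing.Theory Num.Theory.
Local Open Scope ring_scope.
Set Implicit Arguments. Unset Strict Implicit. Unset Printing Implicit Defensive.

Lemma medgesP m (s : seq 'I_m) i r :
  reflect (i < size s /\ nth r s i = r)%N ((i, r) \in medges s).
Proof.
rewrite /medges; apply: (iffP (nthP (0%N, r))).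
  case=> j; rewrite size_zip size_iota minnn => js.
  rewrite nth_zip ?size_iota // nth_iota // add0n => -[<- <-]; split=> //; apply: set_nth_default; rewrite -?js //.
move=> [is_ ns]; exists i; first by rewrite size_zip size_iota minnn.
by rewrite nth_zip ?size_iota // nth_iota // add0n ns.
Qed.

Lemma inl_eq m (i j : nat) : (inl i == inl j :> nat + 'I_m) = (i == j).
Proof. by apply/eqP/eqP => [[]|->]. Qed.
Lemma inr_eq m (a b : 'I_m) : (inr a == inr b :> nat + 'I_m) = (a == b).
Proof. by apply/eqP/eqP => [[]|->]. Qed.
Lemma inlr_eq m (i : nat) (a : 'I_m) : (inl i == inr a :> nat + 'I_m) = false.
Proof. by []. Qed.
Lemma inrl_eq m (i : nat) (a : 'I_m) : (inr a == inl i :> nat + 'I_m) = false.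
Proof. by []. Qed.


Lemma key_move m (d : 'I_m) (s1 s2 : seq 'I_m) i :
  legal_update 4 s1 s2 -> size s2 = (size s1).+1 -> uniq s2 ->
  (i < size s1)%N -> nth d s2 i != nth d s1 i -> nth d s2 i \in s1 -> False.
Proof.
move=> [Hk _] Hs Hu Hi Hne Hin.
set t := size s1 in Hs Hi.
set a := nth d s2 i in Hne Hin.
set j := index a s1.
have Hj : (j < t)%N by rewrite index_mem.
have Hja : nth d s1 j = a by rewrite nth_index.
have Hji : j != i by apply: contraNneq Hne => <-; rewrite Hja.
have Hnth : forall x y, (x < t.+1)%N -> (y < t.+1)%N -> x != y -> nth d s2 x != nth d s2 y.
  by move=> x y Hx Hy; rewrite nth_uniq ?Hs.
set b := nth d s2 j. set c := nth d s2 t.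
have Hba : b != a by apply: Hnth; lia.
have Hab : a != b by rewrite eq_sym.
have Hac : a != c by apply: Hnth; lia.
have Hbc : b != c by apply: Hnth; lia.
have Hij : i != j by rewrite eq_sym.
have Hit : i != t by lia.
have Hjt : j != t by lia.
set E1 := medges s1. set E2 := medges s2.
have inD : forall e, e \in E2 -> e \notin E1 ->
    (inl e.1 \in edge_vertices ([seq e <- E1 | e \notin E2] ++ [seq e <- E2 | e \notin E1]))
    && (inr e.2 \in edge_vertices ([seq e <- E1 | e \notin E2] ++ [seq e <- E2 | e \notin E1])).
  move=> e H2 H1; rewrite /edge_vertices !mem_cat.
  apply/andP; split; apply/orP; [left|right]; apply: map_f; rewrite mem_cat; apply/orP; right; rewrite mem_filter; apply/andP; split => //.
have e1 : (i, a) \in E2 by apply/medgesP; split; [lia | apply: set_nth_default; lia].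
have e2 : (j, b) \in E2 by apply/medgesP; split; [lia | apply: set_nth_default; lia].
have e3 : (t, c) \in E2 by apply/medgesP; split; [lia | apply: set_nth_default; lia].
have f1 : (i, a) \notin E1.
  apply/medgesP => -[_ H]; move: Hne; rewrite -/a -H (set_nth_default d) ?eqxx //.
have f2 : (j, b) \notin E1.
  apply/medgesP => -[_ H]; move: Hba; rewrite -Hja -H (set_nth_default d) ?eqxx //.
have f3 : (t, c) \notin E1 by apply/medgesP => -[]; rewrite ltnn.
move: (inD _ e1 f1) (inD _ e2 f2) (inD _ e3 f3) => /= /andP[g1 g2] /andP[g3 g4] /andP[g5 g6].
have : (6 <= num_reassign s1 s2)%N.
  rewrite /num_reassign -/E1 -/E2.
  set V := edge_vertices _.
  have -> : 6%N = size [:: inl i; inl j; inl t; inr a; inr b; inr c] by [].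
  apply: uniq_leq_size.
    rewrite /= !inE !inl_eq !inr_eq !inlr_eq ?inrl_eq /= !orbF; rewrite (negbTE Hij) (negbTE Hit) (negbTE Hjt) (negbTE Hab) (negbTE Hac) Hbc.
    by [].
  move=> x; rewrite mem_undup !inE; do 5! (case/orP => [/eqP -> // | ]); by move/eqP->.
by move=> H; move: (leq_trans H Hk).
Qed.

Definition sA (R : realType) (A : online_alg R) m (ws : seq ('I_m -> R)) j :=
  A m (take j ws).
Definition newv m (d : 'I_m) (s1 s2 : seq 'I_m) : 'I_m :=
  nth d [seq r <- s2 | r \notin s1] 0.
Definition nvw (R : realType) (A : online_alg R) m (d : 'I_m) ws j :=
  newv d (sA A ws j) (sA A ws j.+1).
Definition sel (R : realType) (A : online_alg R) m (d : 'I_m) ws (r : 'I_m) : bool :=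
  let t := size ws in
  if (t < 2)%N then false
  else if ~~ odd t then (r == nvw A d ws (t - 2)) || (r == nvw A d ws (t - 1))
  else r == (if nth d (sA A ws t) (t - 1) == nvw A d ws (t - 2)
             then nvw A d ws (t - 2) else nvw A d ws (t - 3)).
Definition Wt (R : realType) (A : online_alg R) m (d : 'I_m) ws : 'I_m -> R :=
  fun r => (sel A d ws r)%:R.
Fixpoint gen (R : realType) (A : online_alg R) m (d : 'I_m) t : seq ('I_m -> R) :=
  if t is t'.+1 then rcons (gen A d t') (Wt A d (gen A d t')) else [::].

Definition sq (R : realType) (A : online_alg R) m (d : 'I_m) t := A m (gen A d t).
Definition nv (R : realType) (A : online_alg R) m (d : 'I_m) j :=
  newv d (sq A d j) (sq A d j.+1).
Definition selS (R : realType) (A : online_alg R) m (d : 'I_m) i (r : 'I_m) : bool :=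
  if (i < 2)%N then false
  else if ~~ odd i then (r == nv A d (i - 2)) || (r == nv A d (i - 1))
  else r == (if nth d (sq A d i) (i - 1) == nv A d (i - 2)
             then nv A d (i - 2) else nv A d (i - 3)).
Definition good (R : realType) (A : online_alg R) m (d : 'I_m) t i :=
  selS A d i (nth d (sq A d t) i).

Lemma size_gen (R : realType) (A : online_alg R) m (d : 'I_m) t : size (gen A d t) = t.
Proof. by elim: t => //= t IH; rewrite size_rcons IH. Qed.

Lemma take_gen (R : realType) (A : online_alg R) m (d : 'I_m) j t :
  (j <= t)%N -> take j (gen A d t) = gen A d j.
Proof.
elim: t => [|t IH]; first by rewrite leqn0 => /eqP ->.
rewrite leq_eqVlt => /orP[/eqP ->|]; first by rewrite take_oversize // size_gen.
rewrite ltnS => Hj /=; rewrite -cats1 takel_cat ?size_gen // IH //.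
Qed.

Lemma nth_gen (R : realType) (A : online_alg R) m (d : 'I_m) i t :
  (i < t)%N -> nth (fun _ => 0) (gen A d t) i = Wt A d (gen A d i).
Proof.
elim: t => // t IH; rewrite ltnS leq_eqVlt => /orP[/eqP ->|Hi] /=.
  by rewrite nth_rcons size_gen ltnn eqxx.
by rewrite nth_rcons size_gen Hi IH.
Qed.

Lemma selE (R : realType) (A : online_alg R) m (d : 'I_m) i r :
  sel A d (gen A d i) r = selS A d i r.
Proof.
rewrite /sel /selS /nvw /nv /sA size_gen; case: ltnP => // Hi.
by rewrite !take_gen //; lia.
Qed.

Lemma gen_nonneg (R : realType) (A : online_alg R) m (d : 'I_m) t i r :
  0 <= nth (fun _ => 0) (gen A d t) i r.
Proof.
case: (ltnP i t) => Hi; first by rewrite nth_gen // /Wt ler0n.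
by rewrite nth_default ?size_gen.
Qed.

Lemma gen01 (R : realType) (A : online_alg R) m (d : 'I_m) t : zero_one_weights (gen A d t).
Proof.
move=> i r; rewrite size_gen => Hi; rewrite nth_gen // /Wt.
by case: sel; [right|left].
Qed.

Lemma V1 (R : realType) (A : online_alg R) m (d : 'I_m) t :
  valid_alg 4 A -> (t <= m)%N -> size (sq A d t) = t /\ uniq (sq A d t).
Proof.
move=> HA Ht; have [] := HA m (gen A d t); rewrite ?size_gen //.
  by move=> i r _; apply: gen_nonneg.
by case/andP => /eqP -> ->.
Qed.

Lemma V2 (R : realType) (A : online_alg R) m (d : 'I_m) t :
  valid_alg 4 A -> (t < m)%N -> legal_update 4 (sq A d t) (sq A d t.+1).
Proof.
move=> HA Ht; have := HA m (gen A d t.+1); rewrite size_gen.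
move=> /(_ Ht) /(_ (fun i r _ => @gen_nonneg _ A _ d _ i r)) [_ H].
by apply: H.
Qed.

Lemma mono (R : realType) (A : online_alg R) m (d : 'I_m) t t' r :
  valid_alg 4 A -> (t <= t')%N -> (t' <= m)%N -> r \in sq A d t -> r \in sq A d t'.
Proof.
move=> HA; elim: t' => [|t' IH]; first by rewrite leqn0 => /eqP -> .
rewrite leq_eqVlt => /orP[/eqP -> //|]; rewrite ltnS => H1 H2 Hr.
have [_ H] := V2 d HA H2; apply: H; by apply: IH => //; apply: ltnW.
Qed.

Lemma nv_new (R : realType) (A : online_alg R) m (d : 'I_m) t :
  valid_alg 4 A -> (t < m)%N -> (nv A d t \in sq A d t.+1) && (nv A d t \notin sq A d t).
Proof.
move=> HA Ht; rewrite /nv /newv.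
case E: [seq r <- sq A d t.+1 | r \notin sq A d t] => [|x l] /=.
  have [S1 U1] := V1 d HA Ht; have [S0 U0] := V1 d HA (ltnW Ht).
  have : (size (sq A d t.+1) <= size (sq A d t))%N.
    apply: uniq_leq_size => // r Hr; apply/negPn/negP => Hn.
    have : r \in [seq r <- sq A d t.+1 | r \notin sq A d t] by rewrite mem_filter Hn Hr.
    by rewrite E.
  by rewrite S1 S0 ltnn.
have : x \in [seq r <- sq A d t.+1 | r \notin sq A d t] by rewrite E mem_head.
by rewrite mem_filter andbC.
Qed.

Lemma nv_inj (R : realType) (A : online_alg R) m (d : 'I_m) j j' :
  valid_alg 4 A -> (j < m)%N -> (j' < m)%N -> nv A d j = nv A d j' -> j = j'.
Proof.
move=> HA.
wlog: j j' / (j <= j')%N.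
  move=> W Hj Hj' E; case: (leqP j j') => H; first by apply: W.
  by apply/esym/W => //; apply: ltnW.
rewrite leq_eqVlt => /orP[/eqP -> //|Hlt] Hj Hj' E.
have /andP[H1 _] := nv_new d HA Hj.
have /andP[_ H2] := nv_new d HA Hj'.
have : nv A d j \in sq A d j' by apply: mono H1 => //; apply: ltnW.
by rewrite E (negbTE H2).
Qed.

Lemma selS_sub (R : realType) (A : online_alg R) m (d : 'I_m) i r :
  valid_alg 4 A -> (i <= m)%N -> selS A d i r -> r \in sq A d i.
Proof.
move=> HA Hi; rewrite /selS; case: ltnP => // H2.
have P : forall j, (j.+1 <= i)%N -> nv A d j \in sq A d i.
  move=> j Hj; have /andP[H _] := nv_new d HA (leq_trans Hj Hi).
  by apply: mono H.
case: ifP => _.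
  by case/orP => /eqP ->; apply: P; lia.
by move/eqP ->; case: ifP => _; apply: P; lia.
Qed.

Lemma stay (R : realType) (A : online_alg R) m (d : 'I_m) t i :
  valid_alg 4 A -> (i < t)%N -> (t < m)%N -> good A d t.+1 i ->
  nth d (sq A d t.+1) i = nth d (sq A d t) i.
Proof.
move=> HA Hi Ht G; apply/eqP/negPn/negP => Hne.
have [S1 U1] := V1 d HA Ht; have [S0 U0] := V1 d HA (ltnW Ht).
apply: (key_move (V2 d HA Ht)) Hne _; rewrite ?S1 ?S0 //.
apply: (@mono _ _ _ _ i) => //; try lia.
apply: selS_sub G => //; lia.
Qed.

Lemma good_down (R : realType) (A : online_alg R) m (d : 'I_m) i j t :
  valid_alg 4 A -> (i < j)%N -> (j <= t)%N -> (t <= m)%N -> good A d t i -> good A d j i.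
Proof.
move=> HA Hij; elim: t => [|t IH]; first by rewrite leqn0 => /eqP ->.
rewrite leq_eqVlt => /orP[/eqP -> //|]; rewrite ltnS => Hj Ht G.
apply: IH => //; first by apply: ltnW.
have Hit : (i < t)%N by lia.
by move: G; rewrite /good => G; rewrite -(stay HA Hit Ht G).
Qed.

Lemma selS_even (R : realType) (A : online_alg R) m (d : 'I_m) k r : (0 < k)%N ->
  selS A d k.*2 r = (r == nv A d (k.*2 - 2)) || (r == nv A d (k.*2 - 1)).
Proof.
move=> Hk; rewrite /selS odd_double /=.
by have -> : (k.*2 < 2)%N = false by lia.
Qed.

Lemma selS_odd (R : realType) (A : online_alg R) m (d : 'I_m) k r : (0 < k)%N ->
  selS A d k.*2.+1 r = (r == if nth d (sq A d k.*2.+1) k.*2 == nv A d (k.*2 - 1)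
                             then nv A d (k.*2 - 1) else nv A d (k.*2 - 2)).
Proof.
move=> Hk; rewrite /selS /= odd_double /=.
have -> : (k.*2.+1 < 2)%N = false by lia.
have -> : (k.*2.+1 - 2 = k.*2 - 1)%N by lia.
have -> : (k.*2.+1 - 3 = k.*2 - 2)%N by lia.
by rewrite subn1.
Qed.

Lemma pair (R : realType) (A : online_alg R) m (d : 'I_m) k :
  valid_alg 4 A -> (0 < k)%N -> (k.*2.+2 <= m)%N ->
  ~~ (good A d k.*2.+2 k.*2 && good A d k.*2.+2 k.*2.+1).
Proof.
move=> HA Hk Hm; apply/negP => /andP[Gx Gy].
have St := stay HA (ltnSn _) Hm Gx.
move: Gx Gy; rewrite /good St selS_even // selS_odd //.
set h := nth d (sq A d k.*2.+1) k.*2 => Gx.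
have -> : (if h == nv A d (k.*2 - 1) then nv A d (k.*2 - 1) else nv A d (k.*2 - 2)) = h.
  case: eqP => [<- //| Hne]; move: Gx => /orP[/eqP -> // | /eqP Hc].
  by exfalso; apply: Hne.
rewrite /h -St.
have [S U] := V1 d HA Hm.
by rewrite nth_uniq ?S //; lia.
Qed.

Lemma zip_sum (R : realType) m (d : 'I_m) (ws : seq ('I_m -> R)) (s : seq 'I_m) :
  size ws = size s ->
  \sum_(p <- zip ws s) p.1 p.2 = \sum_(i < size ws) nth (fun _ => 0) ws i (nth d s i).
Proof.
elim: ws s => [|w ws IH] [|x s] //=; first by rewrite big_nil big_ord0.
case=> H; rewrite big_cons big_ord_recl /= IH //.
Qed.

Lemma sum_pairs (f : nat -> nat) M :
  (\sum_(i < M.*2) f i = \sum_(k < M) (f k.*2 + f k.*2.+1))%N.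
Proof.
elim: M => [|M IH]; first by rewrite !big_ord0.
by rewrite doubleS !big_ord_recr /= IH addnA.
Qed.

Lemma sum_pairs' (f : nat -> nat) M n : n = M.*2 ->
  (\sum_(i < n) f i = \sum_(k < M) (f k.*2 + f k.*2.+1))%N.
Proof. by move=> ->; apply: sum_pairs. Qed.

Lemma alg_bound (R : realType) (A : online_alg R) N (d : 'I_(N.*2.+2)) :
  valid_alg 4 A ->
  (\sum_(i < N.*2.+2) good A d N.*2.+2 i <= N)%N.
Proof.
move=> HA.
rewrite (@sum_pairs' (fun i => good A d N.*2.+2 i) N.+1 N.*2.+2); last by rewrite doubleS.
have g0 : good A d N.*2.+2 0 = false by [].
have g1 : good A d N.*2.+2 1 = false by [].
rewrite big_ord_recl /= add0n.
rewrite -[X in (_ <= X)%N]card_ord -sum1_card.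
apply: leq_sum => k _.
set K := bump 0 k.
have Hk : (0 < K)%N by [].
have Hm : (K.*2.+2 <= N.*2.+2)%N by move: (ltn_ord k); rewrite /K /bump /=; lia.
have P := @pair _ A _ d K HA Hk Hm.
have G1 := @good_down _ A _ d (K.*2) (K.*2.+2) (N.*2.+2) HA.
have G2 := @good_down _ A _ d (K.*2.+1) (K.*2.+2) (N.*2.+2) HA.
move: P G1 G2.
case: (good A d N.*2.+2 K.*2); case: (good A d N.*2.+2 K.*2.+1) => //=.
move=> P G1 G2; rewrite G1 ?G2 // in P; lia.
Qed.

Lemma le_bigmax_seq (R : realType) (T : eqType) (r : seq T) (P : pred T) (F : T -> R) x :
  x \in r -> P x -> F x <= \big[Num.max/0]_(i <- r | P i) F i.
Proof.
elim: r => // y r IH; rewrite inE big_cons => /orP[/eqP <-|Hx] Px.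
  by rewrite Px le_max lexx.
case: ifP => _; last by apply: IH.
by rewrite le_max IH ?orbT.
Qed.

Lemma OPT_ge (R : realType) m (d : 'I_m) (ws : seq ('I_m -> R)) (g : seq 'I_m) :
  size g = size ws -> uniq g ->
  \sum_(i < size ws) nth (fun _ => 0) ws i (nth d g i) <= OPT ws.
Proof.
move=> Sg Ug.
pose f := [ffun i : 'I_(size ws) => nth d g i].
have Hf : injectiveb f.
  apply/injectiveP => i j; rewrite !ffunE => /eqP.
  by rewrite nth_uniq ?Sg // => /eqP /val_inj.
rewrite /OPT.
have -> : \sum_(i < size ws) nth (fun _ => 0) ws i (nth d g i) =
          \sum_(i < size ws) nth (fun _ => 0) ws i (f i).
  by apply: eq_bigr => i _; rewrite ffunE.
by apply: le_bigmax_seq; [exact: mem_index_enum | exact: Hf].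
Qed.

Definition cc (R : realType) (A : online_alg R) m (d : 'I_m) k :=
  nth d (sq A d k.*2.+1) k.*2 == nv A d (k.*2 - 1).
Definition pi (R : realType) (A : online_alg R) m (d : 'I_m) N i : nat :=
  if (i < 2)%N then (i + N.*2)%N
  else (i - 2 - odd i + (odd i == cc A d i./2))%N.

Lemma pi_lt (R : realType) (A : online_alg R) m (d : 'I_m) N i :
  (i < N.*2.+2)%N -> (pi A d N i < N.*2.+2)%N.
Proof.
rewrite /pi; case: ifP => H1 H2; first lia.
case: (odd i == _) => /=; lia.
Qed.

Lemma pi_inj (R : realType) (A : online_alg R) m (d : 'I_m) N i j :
  (i < N.*2.+2)%N -> (j < N.*2.+2)%N -> pi A d N i = pi A d N j -> i = j.
Proof.
rewrite /pi => Hi Hj.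
case: ifP => H1; case: ifP => H2; first lia; try by (case: (_ == _) => /=; lia).
case: (i./2 =P j./2) => E.
  rewrite E; case: (cc A d j./2); case: (odd i =P true) => Oi; case: (odd j =P true) => Oj; 
    move: Oi Oj E => /=; lia.
by case: (_ == _); case: (_ == _) => /=; lia.
Qed.

Lemma g_good (R : realType) (A : online_alg R) m (d : 'I_m) N i :
  (2 <= i)%N -> selS A d i (nv A d (pi A d N i)).
Proof.
move=> H2; rewrite /pi; have -> : (i < 2)%N = false by lia.
have Hi := odd_double_half i.
case O: (odd i) Hi => /= Hi.
  have Hk : (0 < i./2)%N by lia.
  rewrite -Hi selS_odd // -/(cc A d _).
  have -> : ((1 + i./2.*2)./2) = i./2 by lia.
  have -> : (1 + i./2.*2 - 2 - 1)%N = (i./2.*2 - 2)%N by lia.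
  move: (cc A d i./2) => b.
  case: b => /=; last by rewrite addn0 eqxx.
  by have -> : (i./2.*2 - 2 + 1)%N = (i./2.*2 - 1)%N by lia.
have Hk : (0 < i./2)%N by lia.
rewrite add0n in Hi; rewrite -Hi selS_even //.
have -> : i./2.*2./2 = i./2 by lia.
move: (cc A d i./2) => b.
case: b => /=; rewrite subn0; first by rewrite addn0 eqxx.
have -> : (i./2.*2 - 2 + 1)%N = ((i./2).*2 - 1)%N by lia.
by rewrite eqxx orbT.
Qed.

Lemma opt_lb (R : realType) (A : online_alg R) N (d : 'I_(N.*2.+2)) :
  valid_alg 4 A -> (N.*2)%:R <= OPT (gen A d N.*2.+2).
Proof.
move=> HA.
set g := [seq nv A d (pi A d N i) | i <- iota 0 N.*2.+2].
have Sg : size g = size (gen A d N.*2.+2) by rewrite size_map size_iota size_gen.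
have Ug : uniq g.
  rewrite map_inj_in_uniq ?iota_uniq // => i j; rewrite !mem_iota !add0n => /andP[_ Hi] /andP[_ Hj] E.
  apply: (pi_inj Hi Hj); apply: (@nv_inj _ A _ d _ _ HA) E; exact: pi_lt.
apply: le_trans (OPT_ge d Sg Ug).
rewrite size_gen.
have T : forall i : 'I_(N.*2.+2), (2 <= i)%N ->
    nth (fun _ => 0) (gen A d N.*2.+2) i (nth d g i) = 1.
  move=> i Hi; rewrite nth_gen // /Wt selE (nth_map 0%N) ?size_iota // nth_iota // add0n g_good //.
have T0 : forall i, 0 <= nth (fun _ => 0) (gen A d N.*2.+2) i (nth d g i).
  by move=> i; apply: gen_nonneg.
rewrite !big_ord_recl.
rewrite -[X in X <= _]add0r; apply: lerD; first by apply: T0.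
rewrite -[X in X <= _]add0r; apply: lerD; first by apply: T0.
rewrite (_ : (N.*2)%:R = \sum_(i < N.*2) (1 : R)); last by rewrite sumr_const card_ord.
by apply: ler_sum => i _; rewrite T.
Qed.

Theorem theorem4 (R : realType) (eps : R) : 0 < eps ->
  forall A : online_alg R, valid_alg 4 A ->
  forall c : R, 0 <= c ->
  exists (m : nat) (ws : seq ('I_m -> R)),
    [/\ (size ws <= m)%N, zero_one_weights ws &
        mweight ws (A m ws) < (2^-1 + eps) * OPT ws - c].
Proof.
move=> Heps A HA c Hc.
pose N := (Num.truncn (c / eps)).+1.
pose d : 'I_(N.*2.+2) := ord0.
exists N.*2.+2, (gen A d N.*2.+2); split.
- by rewrite size_gen.
- exact: gen01.
change (mweight (gen A d N.*2.+2) (sq A d N.*2.+2) < (2^-1 + eps) * OPT (gen A d N.*2.+2) - c).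
have Halg : mweight (gen A d N.*2.+2) (sq A d N.*2.+2) <= N%:R.
  rewrite /mweight (zip_sum d); last by rewrite size_gen; have [->] := V1 d HA (leqnn _).
  rewrite size_gen.
  have -> : \sum_(i < N.*2.+2) nth (fun _ => 0) (gen A d N.*2.+2) i (nth d (sq A d N.*2.+2) i)
      = ((\sum_(i < N.*2.+2) good A d N.*2.+2 i)%N)%:R.
    by rewrite natr_sum; apply: eq_bigr => i _; rewrite nth_gen // /Wt selE.
  by rewrite ler_nat; apply: alg_bound.
have Hopt := opt_lb d HA.
have Hc2 : c < N%:R * eps.
  by rewrite -ltr_pdivrMr //; apply: truncnS_gt.
have H2 : (N.*2)%:R = 2 * N%:R :> R by rewrite -mul2n natrM.
rewrite H2 in Hopt.
have Hm : (2^-1 + eps) * (2 * N%:R) <= (2^-1 + eps) * OPT (gen A d N.*2.+2).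
  by apply: ler_wpM2l => //; apply: addr_ge0 => //; [rewrite invr_ge0 ler0n | apply: ltW].
have E : (2^-1 + eps) * (2 * N%:R) = N%:R + 2 * (N%:R * eps) :> R by field.
rewrite E in Hm.
lra.
Qed.
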